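(* Let $\dagger=\Omega_1\land\cdots\land\Omega_M$ be a $3$-SAT formula in CNF over Boolean variables $\sigma_1,\dots,\sigma_N$, each clause $\Omega_k=(\ell^k_1\lor\ell^k_2\lor\ell^k_3)$ consisting of exactly three literals over three distinct variables. Let $\ddagger$ be the Max $2$-SAT instance over $\sigma_1,\dots,\sigma_N,d^1,\dots,d^M$ consisting, for each $k$, of the block $\Omega'_k$ of $10$ clauses $$(\ell^k_1),(\ell^k_2),(\ell^k_3),(d^k),(\neg\ell^k_1\lor\neg\ell^k_2),(\neg\ell^k_1\lor\neg\ell^k_3),(\neg\ell^k_2\lor\neg\ell^k_3),(\ell^k_1\lor\neg d^k),(\ell^k_2\lor\neg d^k),(\ell^k_3\lor\neg d^k).$$ Suppose $\ddagger$ has been solved, yielding an assignment of all $N+M$ variables. For $a\in\{0,1\}$ let $I_a=\{k: d^k=a\}$, let $\mathfrak{S}_a$ be the number of satisfied clauses of $\ddagger$ lying in the blocks $\Omega'_k$, $k\in I_a$, and let $\mathcal{V}_a,\mathcal{S}_a$ be the numbers of $k\in I_a$ for which $\Omega_k$ is violated, respectively satisfied. Let $\mathcal{V}=\mathcal{V}_0+\mathcal{V}_1$ and $\mathcal{S}=\mathcal{S}_0+\mathcal{S}_1$ be the numbers of violated and satisfied clauses of $\dagger$. Then: (i) $(\mathcal{V}_0,\mathcal{S}_0)$ is the unique non-negative integer solution of $6\mathcal{V}_0+7\mathcal{S}_0=\mathfrak{S}_0$, $\mathcal{V}_0+\mathcal{S}_0=|I_0|$; (ii) (determination by enumeration) $(\mathcal{V}_1,\mathcal{S}_1)$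 lies in the finite set of pairs $(v,\,s_2+s_3)$ where $(s_2,s_3,v)$ ranges over the non-negative integer solutions of $\mathfrak{S}_1=6s_2+7s_3+4v$, $|I_1|=v+s_2+s_3$; consequently $(\mathcal{V},\mathcal{S})$ lies in a finite set of candidates computable from $\mathfrak{S}_0,\mathfrak{S}_1,|I_0|,|I_1|$; (iii) if in addition the number of Case 1 clauses (those $k$ with $\ell^k_1=\ell^k_2=\ell^k_3=0$) is known, then the exact values of $\mathcal{V}$ and $\mathcal{S}$ are retrieved.
   Context: Truth values are identified with $\{0,1\}$. ''Case 1'' refers to a clause $\Omega_k$ whose three literals are all false under the assignment. The variables $d^k$ are called ancillary variables. *)

(* Defs.v *)
From mathcomp Require Import all_boot.
Set Implicit Arguments. Unset Strict Implicit. Unset Printing Implicit Defensive.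

(* Variables of the Max 2-SAT instance: sigma_i (inl i) and d^k (inr k). *)
Definition var2 (N M : nat) := ('I_N + 'I_M)%type.

(* A literal is a pair (variable, polarity); polarity true = positive literal. *)
Definition lit_val {V : Type} (a : V -> bool) (l : V * bool) : bool :=
  if l.2 then a l.1 else ~~ a l.1.

Definition negl {V : Type} (l : V * bool) : V * bool := (l.1, ~~ l.2).

(* A 3-SAT formula with M clauses over N variables: clause k has literals
   F k 0, F k 1, F k 2. *)
Definition formula3 (N M : nat) := 'I_M -> 'I_3 -> 'I_N * bool.

Definition i0 : 'I_3 := @Ordinal 3 0 isT.
Definition i1 : 'I_3 := @Ordinal 3 1 isT.
Definition i2 : 'I_3 := @Ordinal 3 2 isT.

Definition liftl (N M : nat) (F : formula3 N M) (k : 'I_M) (i : 'I_3)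
  : var2 N M * bool := (inl (F k i).1, (F k i).2).

Definition dlit (N M : nat) (k : 'I_M) : var2 N M * bool := (inr k, true).

Definition block (N M : nat) (F : formula3 N M) (k : 'I_M)
  : seq (seq (var2 N M * bool)) :=
  let l1 := liftl F k i0 in let l2 := liftl F k i1 in let l3 := liftl F k i2 in
  let d := @dlit N M k in
  [:: [:: l1]; [:: l2]; [:: l3]; [:: d];
      [:: negl l1; negl l2]; [:: negl l1; negl l3]; [:: negl l2; negl l3];
      [:: l1; negl d]; [:: l2; negl d]; [:: l3; negl d]].

Definition ddagger (N M : nat) (F : formula3 N M) : seq (seq (var2 N M * bool)) :=
  flatten [seq block F k | k <- enum 'I_M].

Definition clause_sat {V : Type} (a : V -> bool) (c : seq (V * bool)) : bool :=
  has (lit_val a) c.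

Definition nsat {V : Type} (a : V -> bool) (inst : seq (seq (V * bool))) : nat :=
  count (clause_sat a) inst.

Definition optimal (N M : nat) (F : formula3 N M) (a : var2 N M -> bool) : Prop :=
  forall a' : var2 N M -> bool, nsat a' (ddagger F) <= nsat a (ddagger F).

Definition sat3 (N M : nat) (F : formula3 N M) (a : var2 N M -> bool) (k : 'I_M) : bool :=
  [exists i : 'I_3, lit_val a (liftl F k i)].

Definition Iset (N M : nat) (a : var2 N M -> bool) (b : bool) : {set 'I_M} :=
  [set k : 'I_M | a (inr k) == b].

Definition frakS (N M : nat) (F : formula3 N M) (a : var2 N M -> bool) (b : bool) : nat :=
  \sum_(k in Iset a b) nsat a (block F k).

Definition Vb (N M : nat) (F : formula3 N M) (a : var2 N M -> bool) (b : bool) : nat :=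
  #|[set k in Iset a b | ~~ sat3 F a k]|.
Definition Sb (N M : nat) (F : formula3 N M) (a : var2 N M -> bool) (b : bool) : nat :=
  #|[set k in Iset a b | sat3 F a k]|.

Definition Vtot (N M : nat) (F : formula3 N M) (a : var2 N M -> bool) : nat :=
  #|[set k : 'I_M | ~~ sat3 F a k]|.
Definition Stot (N M : nat) (F : formula3 N M) (a : var2 N M -> bool) : nat :=
  #|[set k : 'I_M | sat3 F a k]|.

Definition case1 (N M : nat) (F : formula3 N M) (a : var2 N M -> bool) : nat :=
  #|[set k : 'I_M | [forall i : 'I_3, lit_val a (liftl F k i) == false]]|.

Definition cand0 (S0 n0 : nat) : seq (nat * nat) :=
  [seq p <- [seq (v, s) | v <- iota 0 n0.+1, s <- iota 0 n0.+1]
     | (6 * p.1 + 7 * p.2 == S0) && (p.1 + p.2 == n0)].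

Definition cand1 (S1 n1 : nat) : seq (nat * nat) :=
  [seq (t.1.1, t.1.2 + t.2) |
     t <- [seq t <- flatten [seq [seq ((v, s2), s3) | s2 <- iota 0 n1.+1, s3 <- iota 0 n1.+1]
                               | v <- iota 0 n1.+1]
          | (S1 == 6 * t.1.2 + 7 * t.2 + 4 * t.1.1) && (n1 == t.1.1 + t.1.2 + t.2)]].

Definition candidates (S0 S1 n0 n1 : nat) : seq (nat * nat) :=
  [seq (p.1 + q.1, p.2 + q.2) | p <- cand0 S0 n0, q <- cand1 S1 n1].

(* Main.v *)
Require Import Defs.
From mathcomp Require Import all_boot.
Definition g (x1 x2 x3 d : bool) : nat :=
  x1 + x2 + x3 + d + (~~x1 || ~~x2) + (~~x1 || ~~x3) + (~~x2||~~x3) + (x1 || ~~d) + (x2 || ~~d) + (x3||~~d).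
Lemma lit_negl {V : Type} (a : V -> bool) l : lit_val a (negl l) = ~~ lit_val a l.
Proof. by rewrite /lit_val /negl /=; case: l.2; rewrite /= ?negbK. Qed.
Lemma nsat_block N M (F : formula3 N M) a k :
  nsat a (block F k) = g (lit_val a (liftl F k i0)) (lit_val a (liftl F k i1)) (lit_val a (liftl F k i2)) (a (inr k)).
Proof.
rewrite /nsat /block /clause_sat /= !lit_negl !orbF /g.
have -> : lit_val a (dlit N k) = a (inr k) by [].
move: (lit_val a (liftl F k i0)) (lit_val a (liftl F k i1)) (lit_val a (liftl F k i2)) (a (inr k)).
by do 4! case.
Qed.
From mathcomp Require Import zify.

Lemma count_flat N M (F : formula3 N M) a (s : seq 'I_M) :
  nsat a (flatten [seq block F k | k <- s]) = \sum_(k <- s) nsat a (block F k).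
Proof.
elim: s => [|k s IH]; first by rewrite big_nil.
by rewrite big_cons -IH /nsat -count_cat.
Qed.

Lemma nsat_dd N M (F : formula3 N M) a :
  nsat a (ddagger F) = \sum_(k < M) nsat a (block F k).
Proof. by rewrite /ddagger count_flat big_enum. Qed.

Lemma flip_le N M (F : formula3 N M) a k : optimal F a ->
  g (lit_val a (liftl F k i0)) (lit_val a (liftl F k i1)) (lit_val a (liftl F k i2)) (~~ a (inr k))
  <= g (lit_val a (liftl F k i0)) (lit_val a (liftl F k i1)) (lit_val a (liftl F k i2)) (a (inr k)).
Proof.
move=> Hopt.
pose a' := fun v : var2 N M => if v == inr k then ~~ a v else a v.
have L : forall j i, lit_val a' (liftl F j i) = lit_val a (liftl F j i) by [].
have E : forall j, j != k -> nsat a' (block F j) = nsat a (block F j).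
  move=> j jk; rewrite nsat_block [RHS]nsat_block !L /a' /=.
  by have -> : (@inr 'I_N 'I_M j == inr k) = false by apply/negbTE; rewrite inj_eq //; exact: inr_inj.
have H := Hopt a'.
rewrite !nsat_dd (bigD1 k) //= [X in _ <= X](bigD1 k) //= in H.
rewrite (eq_bigr (fun j => nsat a (block F j))) in H; last by move=> j jk; exact: E.
rewrite leq_add2r in H.
have H2 : nsat a' (block F k) <= nsat a (block F k) := H.
rewrite nsat_block [X in _ <= X]nsat_block !L in H2.
by rewrite /a' eqxx in H2.
Qed.

Lemma gfacts x1 x2 x3 d : g x1 x2 x3 (~~d) <= g x1 x2 x3 d ->
  if d then g x1 x2 x3 d = 7 /\ (x1||x2||x3) else g x1 x2 x3 d = (if x1||x2||x3 then 7 else 6).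
Proof. by move: x1 x2 x3 d; do 4! case. Qed.

Lemma sat3E N M (F : formula3 N M) a k :
  sat3 F a k = [|| lit_val a (liftl F k i0), lit_val a (liftl F k i1) | lit_val a (liftl F k i2)].
Proof.
apply/existsP/idP.
  case=> -[[|[|[|//]]] Hi] H.
  - have -> : i0 = Ordinal Hi by apply: val_inj. by rewrite H.
  - have -> : i1 = Ordinal Hi by apply: val_inj. by rewrite H orbT.
  - have -> : i2 = Ordinal Hi by apply: val_inj. by rewrite H !orbT.
by case/or3P => H; [exists i0 | exists i1 | exists i2].
Qed.

Lemma case1E N M (F : formula3 N M) a k :
  [forall i : 'I_3, lit_val a (liftl F k i) == false] = ~~ sat3 F a k.
Proof.
rewrite /sat3 negb_exists; apply: eq_forallb => i; by case: (lit_val _ _).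
Qed.

Lemma sum_split (I : finType) (A : {set I}) (P : pred I) (f : I -> nat) x y :
  (forall k, k \in A -> f k = if P k then x else y) ->
  \sum_(k in A) f k = x * #|[set k in A | P k]| + y * #|[set k in A | ~~ P k]|.
Proof.
move=> H; rewrite (bigID P) /=.
rewrite (eq_bigr (fun _ => x)); last by move=> k /andP[kA Pk]; rewrite H // Pk.
rewrite [X in _ + X](eq_bigr (fun _ => y)); last by move=> k /andP[kA /negbTE Pk]; rewrite H // Pk.
rewrite (eq_bigl (fun k => k \in [set k in A | P k])); last by move=> k; rewrite !inE.
rewrite [X in _ + X](eq_bigl (fun k => k \in [set k in A | ~~ P k])); last by move=> k; rewrite !inE.
by rewrite !sum_nat_const mulnC [y * _]mulnC.
Qed.

Lemma card_split (I : finType) (A : {set I}) (P : pred I) :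
  #|A| = #|[set k in A | P k]| + #|[set k in A | ~~ P k]|.
Proof.
rewrite -sum1_card (@sum_split _ A P (fun _ => 1) 1 1) ?mul1n //.
by move=> k _; case: (P k).
Qed.

Theorem theorem2 (N M : nat) (F : 'I_M -> 'I_3 -> 'I_N * bool)
  (Hdistinct : forall k : 'I_M, injective (fun i : 'I_3 => (F k i).1))
  (a : 'I_N + 'I_M -> bool)
  (Hopt : optimal F a) :
  [/\ (* (i) *)
      [/\ 6 * Vb F a false + 7 * Sb F a false = frakS F a false,
          Vb F a false + Sb F a false = #|Iset a false|
        & forall v s : nat, 6 * v + 7 * s = frakS F a false ->
            v + s = #|Iset a false| -> v = Vb F a false /\ s = Sb F a false],
      (* (ii) *)
      exists s2 s3 v : nat,
        [/\ frakS F a true = 6 * s2 + 7 * s3 + 4 * v,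
            #|Iset a true| = v + s2 + s3,
            Vb F a true = v & Sb F a true = s2 + s3],
      (* V = V_0 + V_1, S = S_0 + S_1, and (V, S) lies in the computable candidate set *)
      [/\ Vtot F a = Vb F a false + Vb F a true,
          Stot F a = Sb F a false + Sb F a true
        & (Vtot F a, Stot F a) \in candidates (frakS F a false) (frakS F a true)
                                     #|Iset a false| #|Iset a true| ]
    & (* (iii) *)
      Vtot F a = case1 F a /\
      Stot F a = #|Iset a false| + #|Iset a true| - case1 F a].
Proof.
have G : forall k, if a (inr k) then nsat a (block F k) = 7 /\ sat3 F a k
   else nsat a (block F k) = if sat3 F a k then 7 else 6.
  move=> k; rewrite nsat_block sat3E orbA; exact: gfacts (@flip_le _ _ F a k Hopt).
have fS0 : frakS F a false = 7 * Sb F a false + 6 * Vb F a false.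
  rewrite /frakS (@sum_split _ _ (sat3 F a)  _ 7 6) //.
  move=> k; rewrite inE => /eqP Hk; have := G k; by rewrite Hk.
have V1 : Vb F a true = 0.
  apply/eqP; rewrite cards_eq0; apply/eqP/setP => k; rewrite !inE.
  have := G k; case: (a (inr k)) => //= -[_ ->] //.
have fS1 : frakS F a true = 7 * Sb F a true.
  rewrite /frakS (@sum_split _ _ (sat3 F a)  _ 7 7) //.
    by rewrite -/(Sb F a true) -/(Vb F a true) V1 muln0 addn0.
  move=> k; rewrite inE => /eqP Hk; have := G k; rewrite Hk => -[-> ->] //.
have C0 : Vb F a false + Sb F a false = #|Iset a false|.
  by rewrite (card_split _ (Iset a false) (sat3 F a)) addnC.
have C1 : Vb F a true + Sb F a true = #|Iset a true|.
  by rewrite (card_split _ (Iset a true) (sat3 F a)) addnC.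
have Vt : Vtot F a = Vb F a false + Vb F a true.
  rewrite /Vtot (card_split _ _ (fun k => a (inr k) == false)); congr (_ + _);
  by apply: eq_card => k; rewrite !inE; case: (a (inr k)); case: (sat3 F a k).
have St : Stot F a = Sb F a false + Sb F a true.
  rewrite /Stot (card_split _ _ (fun k => a (inr k) == false)); congr (_ + _);
  by apply: eq_card => k; rewrite !inE; case: (a (inr k)); case: (sat3 F a k).
have Mc : #|Iset a false| + #|Iset a true| = Vtot F a + Stot F a.
  rewrite -C0 -C1 Vt St; lia.
have c1 : Vtot F a = case1 F a.
  rewrite /Vtot /case1; apply: eq_card => k; by rewrite !inE case1E.
split.
- split => //; first by rewrite fS0; lia.
  move=> v s; rewrite fS0 -C0; lia.
- exists 0, (Sb F a true), 0; split => //; rewrite ?fS1 ?V1 -?C1 ?V1; lia.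
- split => //.
  have -> : (Vtot F a, Stot F a) = ((Vb F a false, Sb F a false).1 + (Vb F a true, Sb F a true).1,
           (Vb F a false, Sb F a false).2 + (Vb F a true, Sb F a true).2) by rewrite Vt St.
  rewrite /candidates; apply: (allpairs_f (fun p q : nat * nat => (p.1+q.1, p.2+q.2))).
    rewrite /cand0 mem_filter; apply/andP; split.
      by rewrite /= fS0 -C0; apply/andP; split; apply/eqP; lia.
    by apply: (allpairs_f (fun v s : nat => (v,s))); rewrite mem_iota; lia.
  have -> : (Vb F a true, Sb F a true) = (((Vb F a true, 0), Sb F a true).1.1,
      ((Vb F a true, 0), Sb F a true).1.2 + ((Vb F a true, 0), Sb F a true).2) by [].
  rewrite /cand1; apply: map_f; rewrite mem_filter; apply/andP; split.
    by rewrite /= fS1 -C1 V1; apply/andP; split; apply/eqP; lia.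
  apply/flatten_mapP; exists 0; first by rewrite mem_iota.
  rewrite V1; apply: (allpairs_f (fun s2 s3 : nat => ((0, s2), s3))); rewrite mem_iota; lia.
- split => //; rewrite Mc -c1; lia.
Qed.
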